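(* Let $m\ge1$ be an integer, $\Gamma_1,\Gamma_2$ co-prime integers with $1<\Gamma_1<\Gamma_2$, $m_1=m\Gamma_1$, $m_2=m\Gamma_2$, and let $1\le j\le K+1$. Let $N$ be an integer with $0\le N<\min\big(m_2(1+\ddot n_{2,j}),\,m_1(1+\ddot n_{1,j})\big)$, with remainders $r_i=|N|_{m_i}$, and let $\tilde r_1,\tilde r_2$ be erroneous remainders whose errors satisfy $$-\frac{\sigma_j}{2}\le\frac{\Delta r_1-\Delta r_2}{m}<\frac{\sigma_j}{2}.$$ Let $\mathbf q_{21}=(\tilde r_1-\tilde r_2)/m$. Then: (1) if $\mathbf q_{21}\ge\sigma_j/2$, then $r_1>r_2$; (2) if $\mathbf q_{21}<-\sigma_j/2$, then $r_1<r_2$; (3) if $-\sigma_j/2\le\mathbf q_{21}<\sigma_j/2$, then $r_1=r_2$.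
   Context: $|a|_b$ is the remainder of the integer $a$ modulo the positive integer $b$. Erroneous remainders are integers $\tilde r_i$ with $0\le\tilde r_i<m_i$, errors $\Delta r_i=\tilde r_i-r_i$. Euclidean sequence: $\sigma_{-1}=\Gamma_2$, $\sigma_0=\Gamma_1$, $\sigma_i=|\sigma_{i-2}|_{\sigma_{i-1}}$ for $i\ge1$; $K\ge0$ is the index with $\sigma_K>1$ and $\sigma_{K+1}=1$. For $1\le n<\Gamma_1$, $S_{2,n}=\{|t\Gamma_2|_{\Gamma_1}: 0\le t\le n\}$ and $d_{2,n}$ is the minimum distance between two distinct elements of $S_{2,n}$; for $1\le n<\Gamma_2$, $S_{1,n}=\{|t\Gamma_1|_{\Gamma_2}: 0\le t\le n\}$ and $d_{1,n}$ is defined likewise. $\ddot n_{2,j}=\max\{n:1\le n<\Gamma_1,\ d_{2,n}\ge\sigma_j\}$, $\ddot n_{1,j}=\max\{n:1\le n<\Gamma_2,\ d_{1,n}\ge\sigma_j\}$. *)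

(* Defs.v *)
From HB Require Import structures.
From mathcomp Require Import all_boot all_order all_algebra.
Set Implicit Arguments. Unset Strict Implicit. Unset Printing Implicit Defensive.
Import Order.TTheory GRing.Theory Num.Theory.

(* Euclidean sequence: sig_pair G1 G2 i = (sigma_{i-1}, sigma_i). *)
Fixpoint sig_pair (G1 G2 : nat) (i : nat) : nat * nat :=
  match i with
  | 0 => (G2, G1)
  | i'.+1 => let p := sig_pair G1 G2 i' in (p.2, p.1 %% p.2)
  end.

(* sigma G1 G2 i = sigma_i  (i >= 0), with sigma_{-1} = G2, sigma_0 = G1,
   sigma_i = |sigma_{i-2}|_{sigma_{i-1}}. *)
Definition sigma (G1 G2 i : nat) : nat := (sig_pair G1 G2 i).2.

(* The default value b of the minimum is never reached
   when there are two distinct elements (all distances are < b). *)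
Definition dmin (a b n : nat) : nat :=
  \big[minn/b]_(t < n.+1)
    \big[minn/b]_(t' < n.+1 | (t * a) %% b != (t' * a) %% b)
      `|Posz ((t * a) %% b) - Posz ((t' * a) %% b)|%N.

(* d_{2,n} : S_{2,n} = { |t G2|_{G1} }, and d_{1,n} : S_{1,n} = { |t G1|_{G2} } *)
Definition d2 (G1 G2 n : nat) : nat := dmin G2 G1 n.
Definition d1 (G1 G2 n : nat) : nat := dmin G1 G2 n.

Definition nddot2 (G1 G2 j : nat) : nat :=
  \max_(n < G1 | (1 <= n) && (sigma G1 G2 j <= d2 G1 G2 n)) n.
Definition nddot1 (G1 G2 j : nat) : nat :=
  \max_(n < G2 | (1 <= n) && (sigma G1 G2 j <= d1 G1 G2 n)) n.

(* Main.v *)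
Require Import Defs.
From HB Require Import structures.
From mathcomp Require Import all_boot all_order all_algebra.
From mathcomp Require Import zify.
Import Order.TTheory GRing.Theory Num.Theory.

Lemma bigmin_le_seq (I : eqType) (r : seq I) (P : pred I) (F : I -> nat) b i0 :
  i0 \in r -> P i0 -> \big[minn/b]_(i <- r | P i) F i <= F i0.
Proof.
elim: r => [|x r IH] //; rewrite big_cons in_cons; case/orP => [/eqP<-|H] HP.
  by rewrite HP geq_minl.
case: ifP => _; last exact: IH.
exact: (leq_trans (geq_minr _ _) (IH H HP)).
Qed.

Lemma bigmin_le (I : finType) (P : pred I) (F : I -> nat) b i0 :
  P i0 -> \big[minn/b]_(i | P i) F i <= F i0.
Proof. move=> HP; apply: bigmin_le_seq => //; exact: mem_index_enum. Qed.

Lemma gap (a b s k d : nat) : 0 < d < b ->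
  k <= \max_(x < b | (1 <= x) && (s <= dmin a b x)) x -> d = (k * a) %% b -> s <= d.
Proof.
move=> /andP[d0 db] kle dE.
have k0 : 0 < k by case: k kle dE => [|k] //= _; rewrite mul0n mod0n => E; rewrite E in d0.
set P := (fun x : 'I_b => (1 <= x) && (s <= dmin a b x)) in kle.
case: (pickP P) => [i0 Pi0 | none]; last first.
  have : \max_(x < b | P x) (x : nat) <= 0 by apply/bigmax_leqP => i; rewrite none.
  by rewrite leqn0 => /eqP E; rewrite E in kle; rewrite leqn0 in kle; rewrite (eqP kle) in k0.
rewrite (bigop.bigmax_eq_arg i0 Pi0) in kle.
case: (arg_maxnP (fun x : 'I_b => (x : nat)) Pi0) kle => i /andP[_ Hs] _ kle.
apply: (leq_trans Hs).
rewrite /dmin.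
have kl : k < i.+1 by [].
pose F := fun t : 'I_i.+1 => \big[minn/b]_(t' < i.+1 | (t * a) %% b != (t' * a) %% b) `|Posz ((t * a) %% b) - Posz ((t' * a) %% b)|%N.
have := @bigmin_le _ xpredT F b (Ordinal kl) isT.
move=> H1; apply: (leq_trans H1); rewrite /F /=.
have Hne : (k * a) %% b != (0 * a) %% b by rewrite mul0n mod0n -dE -lt0n.
have := @bigmin_le _ (fun t' : 'I_i.+1 => (k * a) %% b != (t' * a) %% b) (fun t' : 'I_i.+1 => `|Posz ((k * a) %% b) - Posz ((t' * a) %% b)|%N) b ord0 Hne.
move=> H2; apply: (leq_trans H2) => /=.
by rewrite mul0n mod0n -dE subr0 absz_nat.
Qed.

Lemma key (m G1 G2 n1 n2 s N : nat) : 0 < m -> 0 < G1 -> 0 < G2 ->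
  N < m * G2 * (1 + n2) -> N < m * G1 * (1 + n1) ->
  (forall k d, 0 < d < G1 -> k <= n2 -> d = (k * G2) %% G1 -> s <= d) ->
  (forall k d, 0 < d < G2 -> k <= n1 -> d = (k * G1) %% G2 -> s <= d) ->
  [\/ N %% (m * G1) = N %% (m * G2), N %% (m * G2) + m * s <= N %% (m * G1)
    | N %% (m * G1) + m * s <= N %% (m * G2)].
Proof.
move=> m0 g1 g2 B2 B1 H2 H1.
set a := N %% m; set M := N %/ m.
have NE : N = M * m + a by exact: divn_eq.
have am : a < m by rewrite ltn_pmod.
have rE : forall G, 0 < G -> N %% (m * G) = (M %% G) * m + a.
  move=> G g; rewrite NE.
  have -> : M * m + a = (M %/ G) * (m * G) + ((M %% G) * m + a).
    by rewrite {1}(divn_eq M G); nia.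
  rewrite modnMDl modn_small //.
  have : M %% G < G by rewrite ltn_pmod.
  nia.
rewrite !rE //.
have MB2 : M < G2 * (1 + n2) by nia.
have MB1 : M < G1 * (1 + n1) by nia.
have k2le : M %/ G2 <= n2 by have : M %/ G2 < 1 + n2 by rewrite ltn_divLR // mulnC.
have k1le : M %/ G1 <= n1 by have : M %/ G1 < 1 + n1 by rewrite ltn_divLR // mulnC.
have ME1 := divn_eq M G1; have ME2 := divn_eq M G2.
have u1l : M %% G1 < G1 by rewrite ltn_pmod.
have u2l : M %% G2 < G2 by rewrite ltn_pmod.
case: (ltngtP (M %% G1) (M %% G2)) => [lt|gt|eq].
- apply: Or33.
  have : s <= M %% G2 - M %% G1.
    apply: (H1 (M %/ G1)) => //; first by apply/andP; split; lia.
    have -> : M %/ G1 * G1 = M %/ G2 * G2 + (M %% G2 - M %% G1) by lia.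
    by rewrite modnMDl; symmetry; apply: modn_small; lia.
  nia.
- apply: Or32.
  have : s <= M %% G1 - M %% G2.
    apply: (H2 (M %/ G2)) => //; first by apply/andP; split; lia.
    have -> : M %/ G2 * G2 = M %/ G1 * G1 + (M %% G1 - M %% G2) by lia.
    by rewrite modnMDl; symmetry; apply: modn_small; lia.
  nia.
- by apply: Or31; rewrite eq.
Qed.

From mathcomp Require Import ring lra.

Theorem lemma7 (m G1 G2 K j N rt1 rt2 : nat) :
  1 <= m -> coprime G1 G2 -> 1 < G1 -> G1 < G2 ->
  1 < sigma G1 G2 K -> sigma G1 G2 K.+1 = 1 ->
  1 <= j <= K.+1 ->
  N < minn (m * G2 * (1 + nddot2 G1 G2 j)) (m * G1 * (1 + nddot1 G1 G2 j)) ->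
  rt1 < m * G1 -> rt2 < m * G2 ->
  (- ((sigma G1 G2 j)%:R / 2%:R) <=
     (((rt1%:Z - (N %% (m * G1))%:Z) - (rt2%:Z - (N %% (m * G2))%:Z))%:~R / m%:R : rat))%R ->
  ((((rt1%:Z - (N %% (m * G1))%:Z) - (rt2%:Z - (N %% (m * G2))%:Z))%:~R / m%:R : rat)
     < (sigma G1 G2 j)%:R / 2%:R)%R ->
  [/\ ((sigma G1 G2 j)%:R / 2%:R <= ((rt1%:Z - rt2%:Z)%:~R / m%:R : rat))%R ->
        N %% (m * G2) < N %% (m * G1),
      (((rt1%:Z - rt2%:Z)%:~R / m%:R : rat) < - ((sigma G1 G2 j)%:R / 2%:R))%R ->
        N %% (m * G1) < N %% (m * G2)
    & (- ((sigma G1 G2 j)%:R / 2%:R) <= ((rt1%:Z - rt2%:Z)%:~R / m%:R : rat))%R ->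
      (((rt1%:Z - rt2%:Z)%:~R / m%:R : rat) < (sigma G1 G2 j)%:R / 2%:R)%R ->
        N %% (m * G1) = N %% (m * G2)].
Proof.
move=> m0 _ g1 g12 _ _ _ NB _ _.
have g2 : 0 < G2 by lia.
have g1' : 0 < G1 by lia.
have [B2 B1] : N < m * G2 * (1 + nddot2 G1 G2 j) /\ N < m * G1 * (1 + nddot1 G1 G2 j).
  by move: NB; rewrite leq_min => /andP[].
have HK := key m G1 G2 (nddot1 G1 G2 j) (nddot2 G1 G2 j) (sigma G1 G2 j) N m0 g1' g2 B2 B1
  (fun k d hd hk hE => @gap _ _ _ k d hd hk hE) (fun k d hd hk hE => @gap _ _ _ k d hd hk hE).
move: HK.
set s := sigma G1 G2 j; set r1 := N %% (m * G1); set r2 := N %% (m * G2).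
set x := (_ / m%:R)%R.
move=> HK hx1 hx2.
have mm0 : (0 < m%:R :> rat)%R by rewrite ltr0n.
set c : rat := ((r1%:R - r2%:R) / m%:R)%R.
have qE : ((rt1%:Z - rt2%:Z)%:~R / m%:R : rat)%R = (x + c)%R.
  rewrite /x /c -mulrDl; congr (_ / _)%R.
  rewrite !rmorphB /=. ring.
rewrite qE.
have s0 : (0 < s%:R :> rat)%R by lra.
have s0' : 0 < s by rewrite -(ltr0n rat).
have cs1 : r2 + m * s <= r1 -> (s%:R <= c)%R.
  move=> h; rewrite /c ler_pdivlMr //.
  have : ((r2 + m * s)%:R <= r1%:R :> rat)%R by rewrite ler_nat.
  rewrite natrD natrM; lra.
have cs2 : r1 + m * s <= r2 -> (c <= - s%:R)%R.
  move=> h; rewrite /c ler_pdivrMr //.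
  have : ((r1 + m * s)%:R <= r2%:R :> rat)%R by rewrite ler_nat.
  rewrite natrD natrM; lra.
have cs3 : r1 = r2 -> c = 0%R by move=> E; rewrite /c E subrr mul0r.
split.
- move=> hq; case: HK => [/cs3|h|/cs2]; [lra | nia | lra].
- move=> hq; case: HK => [/cs3|/cs1|h]; [lra | lra | nia].
- move=> hq1 hq2; case: HK => [//|/cs1|/cs2] ?; exfalso; lra.
Qed.
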